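(* Let $(X,d)$ be a compact metric space and $f\colon X\to X$ a continuous map. If $f$ has the shadowing property around $\overline{M(f)}$, then $f|_{\overline{M(f)}}\colon\overline{M(f)}\to\overline{M(f)}$ has the shadowing property.
   Context: $M(f)$ is the set of minimal points: $x$ such that $f$ restricted to $\overline{\{f^n(x):n\ge0\}}$ is minimal. For $S\subset X$, $f$ has the shadowing property around $S$ if for every $\epsilon>0$ there is $\delta>0$ such that every sequence $(x_i)_{i\ge0}\subset S$ with $d(f(x_i),x_{i+1})\le\delta$ for all $i$ admits $x\in X$ with $d(x_i,f^i(x))\le\epsilon$ for all $i$. The shadowing property for a map $g\colon Y\to Y$ is the same with $S=Y$ and the shadowing point required in $Y$. *)

(* Defs.v *)
From Stdlib Require Import Reals.
Open Scope R_scope.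

Record is_metric {X : Type} (d : X -> X -> R) : Prop := {
  metric_nonneg : forall x y, 0 <= d x y;
  metric_sep    : forall x y, d x y = 0 <-> x = y;
  metric_sym    : forall x y, d x y = d y x;
  metric_tri    : forall x y z, d x z <= d x y + d y z
}.

(* Compactness of a metric space (sequential compactness, equivalent for
   metric spaces): every sequence has a convergent subsequence. *)
Definition seq_converges {X : Type} (d : X -> X -> R) (u : nat -> X) (l : X) : Prop :=
  forall eps, 0 < eps -> exists N, forall n, (n >= N)%nat -> d (u n) l < eps.

Definition compact_metric {X : Type} (d : X -> X -> R) : Prop :=
  forall u : nat -> X, exists (phi : nat -> nat) (l : X),
    (forall n m, (n < m)%nat -> (phi n < phi m)%nat) /\
    seq_converges d (fun n => u (phi n)) l.

Definition continuous_map {X : Type} (d : X -> X -> R) (f : X -> X) : Prop :=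
  forall x eps, 0 < eps -> exists delta, 0 < delta /\
    forall y, d x y < delta -> d (f x) (f y) < eps.

Definition closure {X : Type} (d : X -> X -> R) (S : X -> Prop) : X -> Prop :=
  fun x => forall eps, 0 < eps -> exists y, S y /\ d x y < eps.

Definition is_closed {X : Type} (d : X -> X -> R) (S : X -> Prop) : Prop :=
  forall x, closure d S x -> S x.

Definition orbit {X : Type} (f : X -> X) (x : X) : X -> Prop :=
  fun y => exists n : nat, y = Nat.iter n f x.

Definition orbit_closure {X : Type} (d : X -> X -> R) (f : X -> X) (x : X) : X -> Prop :=
  closure d (orbit f x).

Definition minimal_on {X : Type} (d : X -> X -> R) (f : X -> X) (Y : X -> Prop) : Prop :=
  (exists y, Y y) /\
  forall Z : X -> Prop,
    (forall z, Z z -> Y z) -> (exists z, Z z) -> is_closed d Z ->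
    (forall z, Z z -> Z (f z)) ->
    forall y, Y y -> Z y.

Definition minimal_points {X : Type} (d : X -> X -> R) (f : X -> X) : X -> Prop :=
  fun x => minimal_on d f (orbit_closure d f x).

(* Shadowing property around S, with shadowing point in T (T = X for the
   "around S" notion; T = S for the shadowing property of the restriction). *)
Definition shadowing_around_in {X : Type} (d : X -> X -> R) (f : X -> X)
  (A T : X -> Prop) : Prop :=
  forall eps, 0 < eps -> exists delta, 0 < delta /\
    forall xs : nat -> X,
      (forall i, A (xs i)) ->
      (forall i, d (f (xs i)) (xs (Datatypes.S i)) <= delta) ->
      exists x, T x /\ forall i, d (xs i) (Nat.iter i f x) <= eps.

Definition shadowing_around {X : Type} (d : X -> X -> R) (f : X -> X)
  (S : X -> Prop) : Prop :=
  shadowing_around_in d f S (fun _ => True).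

Definition restriction_has_shadowing {X : Type} (d : X -> X -> R) (f : X -> X)
  (Y : X -> Prop) : Prop :=
  shadowing_around_in d f Y Y.

(* Main.v *)
Require Import Defs.
From Stdlib Require Import Reals Lra Lia Arith List IndefiniteDescription Classical.
Open Scope R_scope.

Lemma my_choice {A B : Type} (P : A -> B -> Prop) :
  (forall a, exists b, P a b) -> exists g : A -> B, forall a, P a (g a).
Proof.
  intros H. exists (fun a => proj1_sig (constructive_indefinite_description _ (H a))).
  intros a. exact (proj2_sig (constructive_indefinite_description _ (H a))).
Qed.

Lemma d_refl {X} {d : X -> X -> R} (Hd : is_metric d) x : d x x = 0.
Proof. apply (metric_sep d Hd). reflexivity. Qed.

Lemma sub_closure {X} {d : X -> X -> R} (Hd : is_metric d) (S : X -> Prop) x :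
  S x -> closure d S x.
Proof. intros Hx e He. exists x. split; auto. rewrite (d_refl Hd). lra. Qed.

Lemma closure_closed {X} {d : X -> X -> R} (Hd : is_metric d) (S : X -> Prop) :
  is_closed d (closure d S).
Proof.
  intros x Hx e He. destruct (Hx (e/2)) as [y [Hy Hxy]]; [lra|].
  destruct (Hy (e/2)) as [z [Hz Hyz]]; [lra|].
  exists z. split; auto. pose proof (metric_tri d Hd x y z). lra.
Qed.

Lemma closure_mono {X} {d : X -> X -> R} (S T : X -> Prop) :
  (forall x, S x -> T x) -> forall x, closure d S x -> closure d T x.
Proof. intros H x Hx e He. destruct (Hx e He) as [y [Hy Hxy]]. eauto. Qed.

Lemma closure_invariant {X} {d : X -> X -> R} {f : X -> X}
  (Hf : continuous_map d f) (S : X -> Prop) :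
  (forall y, S y -> S (f y)) -> forall x, closure d S x -> closure d S (f x).
Proof.
  intros HS x Hx e He. destruct (Hf x e He) as [dl [Hdl H]].
  destruct (Hx dl Hdl) as [y [Hy Hxy]]. exists (f y). split; auto.
Qed.

Lemma closed_min {X} {d : X -> X -> R} (Hd : is_metric d) (S : X -> Prop) x :
  is_closed d S -> closure d S x -> S x.
Proof. intros H; apply H. Qed.

Lemma iter_S {X} (f : X -> X) n x : Nat.iter (S n) f x = f (Nat.iter n f x).
Proof. reflexivity. Qed.

Lemma iter_Sr {X} (f : X -> X) n x : Nat.iter n f (f x) = f (Nat.iter n f x).
Proof. rewrite <- Nat.iter_succ_r. reflexivity. Qed.

Lemma orbit_self {X} (f : X -> X) x : orbit f x x.
Proof. exists 0%nat. reflexivity. Qed.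

Lemma orbit_inv {X} (f : X -> X) x y : orbit f x y -> orbit f x (f y).
Proof. intros [n ->]. exists (S n). reflexivity. Qed.

Lemma oc_self {X} {d : X -> X -> R} (Hd : is_metric d) (f : X -> X) x :
  orbit_closure d f x x.
Proof. apply (sub_closure Hd). apply orbit_self. Qed.

Lemma oc_closed {X} {d : X -> X -> R} (Hd : is_metric d) (f : X -> X) x :
  is_closed d (orbit_closure d f x).
Proof. apply closure_closed; auto. Qed.

Lemma oc_inv {X} {d : X -> X -> R} {f : X -> X} (Hf : continuous_map d f) x y :
  orbit_closure d f x y -> orbit_closure d f x (f y).
Proof. apply closure_invariant; auto. apply orbit_inv. Qed.

Lemma oc_sub {X} {d : X -> X -> R} (f : X -> X) (Z : X -> Prop) x :
  is_closed d Z -> (forall z, Z z -> Z (f z)) -> Z x ->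
  forall y, orbit_closure d f x y -> Z y.
Proof.
  intros Hc Hi Hx y Hy. apply Hc. revert y Hy. apply closure_mono.
  intros y [n ->]. induction n; simpl; auto.
Qed.

Lemma oc_iter {X} {d : X -> X -> R} (Hd : is_metric d) (f : X -> X) x n :
  orbit_closure d f x (Nat.iter n f x).
Proof. apply (sub_closure Hd). exists n. reflexivity. Qed.

Lemma minimal_inv {X} {d : X -> X -> R} {f : X -> X} (Hd : is_metric d)
  (Hf : continuous_map d f) x :
  minimal_points d f x -> minimal_points d f (f x).
Proof.
  intros [Hne Hmin]. unfold minimal_points.
  assert (Hsub : forall y, orbit_closure d f (f x) y -> orbit_closure d f x y).
  { apply oc_sub; [apply oc_closed; auto| intros; apply oc_inv; auto|].
    apply oc_inv; auto. apply oc_self; auto. }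
  assert (Hsup : forall y, orbit_closure d f x y -> orbit_closure d f (f x) y).
  { apply Hmin; auto.
    - exists (f x). apply oc_self; auto.
    - apply oc_closed; auto.
    - intros; apply oc_inv; auto. }
  split.
  - exists (f x). apply oc_self; auto.
  - intros Z HZ Hne' Hc Hi y Hy. apply (Hmin Z); auto.
Qed.

Lemma closureM_inv {X} {d : X -> X -> R} {f : X -> X} (Hd : is_metric d)
  (Hf : continuous_map d f) x :
  closure d (minimal_points d f) x -> closure d (minimal_points d f) (f x).
Proof. apply closure_invariant; auto. intros; apply minimal_inv; auto. Qed.

Lemma minimal_dense {X} {d : X -> X -> R} {f : X -> X} (Hd : is_metric d)
  (Hf : continuous_map d f) m y :
  minimal_points d f m -> orbit_closure d f m y -> orbit_closure d f y m.
Proof.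
  intros [Hne Hmin] Hy.
  apply (Hmin (orbit_closure d f y)).
  - apply oc_sub; auto. apply oc_closed; auto. intros; apply oc_inv; auto.
  - exists y. apply oc_self; auto.
  - apply oc_closed; auto.
  - intros; apply oc_inv; auto.
  - apply oc_self; auto.
Qed.

Lemma minimal_return {X} {d : X -> X -> R} {f : X -> X} (Hd : is_metric d)
  (Hf : continuous_map d f) m k eta :
  minimal_points d f m -> 0 < eta ->
  exists j, d (Nat.iter (j + k) f m) m < eta.
Proof.
  intros Hm He.
  assert (H := minimal_dense Hd Hf m (Nat.iter k f m) Hm (oc_iter Hd f m k)).
  destruct (H eta He) as [y [[j ->] Hy]]. exists j.
  rewrite Nat.iter_add, (metric_sym d Hd). exact Hy.
Qed.

Lemma phi_ge (phi : nat -> nat) :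
  (forall n m, (n < m)%nat -> (phi n < phi m)%nat) -> forall n, (n <= phi n)%nat.
Proof.
  intros H n. induction n; [lia|]. specialize (H n (S n) ltac:(lia)). lia.
Qed.

Lemma iter_cont {X} {d : X -> X -> R} {f : X -> X} (Hf : continuous_map d f) n :
  continuous_map d (fun x => Nat.iter n f x).
Proof.
  induction n; intros x e He.
  - exists e. split; auto.
  - destruct (Hf (Nat.iter n f x) e He) as [r [Hr H1]].
    destruct (IHn x r Hr) as [s [Hs H2]].
    exists s. split; auto. intros y Hy. simpl. apply H1. apply H2. auto.
Qed.

Lemma le_eps (a b : R) : (forall e, 0 < e -> a < b + e) -> a <= b.
Proof.
  intros H. destruct (Rle_or_lt a b) as [|Hlt]; auto.
  specialize (H ((a - b)/2) ltac:(lra)). lra.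
Qed.

Lemma inv_small (r : R) : 0 < r -> exists k : nat, / INR (S k) <= r.
Proof.
  intros Hr. destruct (archimed_cor1 r Hr) as [N [H1 H2]].
  exists N. apply Rle_trans with (/ INR N); [|lra].
  apply Rinv_le_contravar. apply lt_0_INR; lia. apply le_INR; lia.
Qed.

Lemma inv_pos (k : nat) : 0 < / INR (S k).
Proof. apply Rinv_0_lt_compat, lt_0_INR; lia. Qed.

Lemma totally_bounded {X} {d : X -> X -> R} (Hd : is_metric d) (Hc : compact_metric d)
  r : 0 < r -> exists L : list X, forall y, exists c, In c L /\ d y c < r.
Proof.
  intros Hr. apply NNPP. intros Hno.
  assert (H : forall L : list X, exists y, forall c, In c L -> r <= d y c).
  { intros L. apply NNPP. intros H1. apply Hno. exists L. intros y.
    apply NNPP. intros H2. apply H1. exists y. intros c Hc'.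
    apply Rnot_lt_le. intros H3. apply H2. eauto. }
  destruct (my_choice _ H) as [pick Hpick].
  set (g := fix g (n : nat) : list X := match n with O => nil | S n => pick (g n) :: g n end).
  set (u := fun n => pick (g n)).
  assert (Hin : forall m n, (m < n)%nat -> In (u m) (g n)).
  { intros m n Hmn. induction n; [lia|]. simpl. destruct (Nat.eq_dec m n).
    - subst. left. reflexivity.
    - right. apply IHn. lia. }
  destruct (Hc u) as [phi [l [Hphi Hconv]]].
  destruct (Hconv (r/2) ltac:(lra)) as [N HN].
  assert (H1 := Hpick (g (phi (S N))) (u (phi N)) (Hin _ _ (Hphi N (S N) ltac:(lia)))).
  fold (u (phi (S N))) in H1.
  pose proof (HN N ltac:(lia)). pose proof (HN (S N) ltac:(lia)).
  pose proof (metric_tri d Hd (u (phi (S N))) l (u (phi N))).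
  rewrite (metric_sym d Hd l) in H3. lra.
Qed.

Definition pnext (p : nat * nat) : nat * nat :=
  match p with (O, b) => (S b, O) | (S a, b) => (a, S b) end.
Definition penum (n : nat) : nat * nat := Nat.iter n pnext (O, O).

Lemma penum_diag : forall n a b, penum n = (a + b, O)%nat -> penum (n + b) = (a, b).
Proof.
  intros n a b. revert a. induction b; intros a H.
  - rewrite Nat.add_0_r. rewrite H. f_equal; lia.
  - replace (n + S b)%nat with (S (n + b)) by lia. unfold penum. rewrite iter_S.
    fold (penum (n+b)). rewrite (IHb (S a)). reflexivity. rewrite H. f_equal. lia.
Qed.

Lemma penum_surj a b : exists n, penum n = (a, b).
Proof.
  assert (Hs : forall s, exists n, penum n = (s, O)).
  { induction s. exists O. reflexivity.
    destruct IHs as [n Hn]. exists (S (n + s)). unfold penum. rewrite iter_S.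
    fold (penum (n + s)). rewrite (penum_diag n 0 s). reflexivity. exact Hn. }
  destruct (Hs (a + b)%nat) as [n Hn]. exists (n + b)%nat. apply penum_diag; auto.
Qed.

Definition good {X} (d : X -> X -> R) (f : X -> X) (Z : X -> Prop) : Prop :=
  (exists z, Z z) /\ is_closed d Z /\ (forall z, Z z -> Z (f z)).

Definition MinSet {X} (d : X -> X -> R) (f : X -> X) (Z : X -> Prop) : Prop :=
  good d f Z /\ forall Z', good d f Z' -> (forall z, Z' z -> Z z) -> forall z, Z z -> Z' z.

Lemma minset_point {X} {d : X -> X -> R} {f : X -> X} (Hd : is_metric d)
  (Hf : continuous_map d f) Z z : MinSet d f Z -> Z z -> minimal_points d f z.
Proof.
  intros [[Hne [Hc Hi]] Hmin] Hz. split.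
  - exists z. apply oc_self; auto.
  - intros Z' HZ' Hne' Hc' Hi' y Hy.
    assert (Hsub : forall w, orbit_closure d f z w -> Z w) by (apply oc_sub; auto).
    apply (Hmin Z'); [split; auto| |]; auto.
Qed.

Lemma birkhoff {X} {d : X -> X -> R} {f : X -> X} (Hd : is_metric d)
  (Hc : compact_metric d) (Hf : continuous_map d f) (W : X -> Prop) :
  good d f W -> exists Z, MinSet d f Z /\ forall z, Z z -> W z.
Proof.
  intros HW. destruct HW as [[x0 Hx0] [HWc HWi]].
  assert (Hnet : forall k : nat, exists L : list X, forall y, exists c, In c L /\ d y c < / INR (S k)).
  { intros k. apply totally_bounded; auto. apply inv_pos. }
  destruct (my_choice _ Hnet) as [net Hnet'].
  set (U := fun n y => d (nth (snd (penum n)) (net (fst (penum n))) x0) y < / INR (S (fst (penum n)))).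
  assert (step_ex : forall n (K : X -> Prop), exists Z : X -> Prop,
    (good d f K -> good d f Z /\ (forall z, Z z -> K z)) /\
    ((forall y, Z y -> ~ U n y) \/
     ~ (exists Z', good d f Z' /\ (forall z, Z' z -> K z) /\ forall y, Z' y -> ~ U n y))).
  { intros n K. destruct (classic (exists Z', good d f Z' /\ (forall z, Z' z -> K z) /\ forall y, Z' y -> ~ U n y)) as [[Z' HZ']|Hno].
    - exists Z'. split. intros; tauto. left; tauto.
    - exists K. split. intros; split; auto. right; auto. }
  set (step := fun n K => proj1_sig (constructive_indefinite_description _ (step_ex n K))).
  assert (Hstep : forall n K, (good d f K -> good d f (step n K) /\ (forall z, step n K z -> K z)) /\
    ((forall y, step n K y -> ~ U n y) \/
     ~ (exists Z', good d f Z' /\ (forall z, Z' z -> K z) /\ forall y, Z' y -> ~ U n y))).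
  { intros n K. exact (proj2_sig (constructive_indefinite_description _ (step_ex n K))). }
  set (Kseq := fix Kseq (n : nat) : X -> Prop := match n with O => W | S n => step n (Kseq n) end).
  assert (Kgood : forall n, good d f (Kseq n)).
  { induction n. split; [eauto|split; auto]. simpl. apply (proj1 (Hstep n (Kseq n))). auto. }
  assert (Ksub1 : forall n z, Kseq (S n) z -> Kseq n z).
  { intros n z. simpl. apply (proj1 (Hstep n (Kseq n))). auto. }
  assert (Knest : forall n m z, (n <= m)%nat -> Kseq m z -> Kseq n z).
  { intros n m z Hnm. induction Hnm; auto. }
  set (Kinf := fun y => forall n, Kseq n y).
  exists Kinf. split; [split; [split|]|].
  - assert (Hex : forall n, exists y, Kseq n y) by (intros n; apply (Kgood n)).
    destruct (my_choice _ Hex) as [u Hu].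
    destruct (Hc u) as [phi [l [Hphi Hconv]]]. exists l. intros m.
    apply (proj1 (proj2 (Kgood m))). intros e He.
    destruct (Hconv e He) as [N HN]. exists (u (phi (Nat.max N m))). split.
    + apply (Knest m (phi (Nat.max N m))). pose proof (phi_ge phi Hphi (Nat.max N m)). lia. apply Hu.
    + rewrite (metric_sym d Hd). apply HN. lia.
  - split.
    + intros x Hx n. apply (proj1 (proj2 (Kgood n))). revert Hx. apply closure_mono. auto.
    + intros z Hz n. apply (proj2 (proj2 (Kgood n))). auto.
  - intros Z' HZ' Hsub y Hy. apply NNPP. intros Hny.
    assert (Hr : exists r, 0 < r /\ forall z, Z' z -> r <= d y z).
    { apply NNPP. intros H. apply Hny. apply (proj1 (proj2 HZ')). intros e He.
      apply NNPP. intros H2. apply H. exists e. split; auto. intros z Hz.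
      apply Rnot_lt_le. intros H3. apply H2. eauto. }
    destruct Hr as [r [Hr Hrz]].
    destruct (inv_small (r/2) ltac:(lra)) as [k Hk].
    destruct (Hnet' k y) as [c [Hcin Hyc]].
    destruct (In_nth (net k) c x0 Hcin) as [i [_ Hi]].
    destruct (penum_surj k i) as [n Hn].
    assert (HUy : U n y). { unfold U. rewrite Hn. cbn [fst snd]. rewrite Hi. rewrite (metric_sym d Hd). auto. }
    assert (Hdis : forall z, Z' z -> ~ U n z).
    { intros z Hz HU. unfold U in HU. rewrite Hn in HU. cbn [fst snd] in HU. rewrite Hi in HU.
      pose proof (Hrz z Hz). pose proof (metric_tri d Hd y c z). lra. }
    destruct (proj2 (Hstep n (Kseq n))) as [H|H].
    + apply (H y); auto. apply (Hy (S n)).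
    + apply H. exists Z'. split; auto. split; auto. intros z Hz. apply (Hsub z Hz n).
  - intros z Hz. apply (Hz O).
Qed.

Definition IsChain {X} (d : X -> X -> R) (f : X -> X) (dl : R) (n : nat) (g : nat -> X) : Prop :=
  (forall i, (i <= n)%nat -> minimal_points d f (g i)) /\
  (forall i, (i < n)%nat -> d (f (g i)) (g (S i)) <= dl).

Definition chcat {X} (n1 : nat) (g1 g2 : nat -> X) (i : nat) : X :=
  if Nat.leb i n1 then g1 i else g2 (i - n1)%nat.

Lemma chcat_l {X} n1 (g1 g2 : nat -> X) i : (i <= n1)%nat -> chcat n1 g1 g2 i = g1 i.
Proof. intros H. unfold chcat. apply Nat.leb_le in H. rewrite H. reflexivity. Qed.

Lemma chcat_r {X} n1 (g1 g2 : nat -> X) i : (n1 < i)%nat -> chcat n1 g1 g2 i = g2 (i - n1)%nat.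
Proof. intros H. unfold chcat. destruct (Nat.leb i n1) eqn:E; auto. apply Nat.leb_le in E. lia. Qed.

Lemma chcat_chain {X} {d : X -> X -> R} {f : X -> X} dl n1 n2 g1 g2 :
  IsChain d f dl n1 g1 -> IsChain d f dl n2 g2 -> g1 n1 = g2 O ->
  IsChain d f dl (n1 + n2) (chcat n1 g1 g2).
Proof.
  intros [M1 J1] [M2 J2] E. split.
  - intros i Hi. destruct (le_lt_dec i n1).
    + rewrite chcat_l; auto.
    + rewrite chcat_r; auto. apply M2. lia.
  - intros i Hi. destruct (lt_dec i n1).
    + rewrite !chcat_l by lia. apply J1. lia.
    + destruct (Nat.eq_dec i n1).
      * subst. rewrite chcat_l, chcat_r by lia. rewrite E.
        replace (S n1 - n1)%nat with 1%nat by lia. apply J2. lia.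
      * rewrite !chcat_r by lia. replace (S i - n1)%nat with (S (i - n1)) by lia.
      apply J2. lia.
Qed.

Definition ChainN {X} (d : X -> X -> R) (f : X -> X) (dl : R) (n : nat) (a b : X) : Prop :=
  exists g, IsChain d f dl n g /\ g O = a /\ g n = b.

Lemma chain_trans {X} {d : X -> X -> R} {f : X -> X} dl n1 n2 a b c :
  ChainN d f dl n1 a b -> ChainN d f dl n2 b c -> ChainN d f dl (n1 + n2) a c.
Proof.
  intros [g1 [H1 [E1 F1]]] [g2 [H2 [E2 F2]]]. exists (chcat n1 g1 g2). split.
  - apply chcat_chain; auto. congruence.
  - split. rewrite chcat_l by lia. auto.
    destruct n2. rewrite Nat.add_0_r, chcat_l by lia. congruence.
    rewrite chcat_r by lia. replace (n1 + S n2 - n1)%nat with (S n2) by lia. auto.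
Qed.

Lemma minimal_iter {X} {d : X -> X -> R} {f : X -> X} (Hd : is_metric d)
  (Hf : continuous_map d f) n m : minimal_points d f m -> minimal_points d f (Nat.iter n f m).
Proof. intros H. induction n; simpl; auto. apply minimal_inv; auto. Qed.

Lemma chain_orbit {X} {d : X -> X -> R} {f : X -> X} (Hd : is_metric d)
  (Hf : continuous_map d f) dl t a : 0 <= dl -> minimal_points d f a ->
  ChainN d f dl t a (Nat.iter t f a).
Proof.
  intros Hdl Ha. exists (fun i => Nat.iter i f a). split; [split|split; reflexivity].
  - intros; apply minimal_iter; auto.
  - intros i _. simpl. rewrite (d_refl Hd). auto.
Qed.

Lemma chain_jump {X} {d : X -> X -> R} {f : X -> X} dl a b :
  minimal_points d f a -> minimal_points d f b -> d (f a) b <= dl -> ChainN d f dl 1 a b.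
Proof.
  intros Ha Hb H. exists (fun i => match i with O => a | _ => b end).
  split; [split|split; reflexivity].
  - intros [|i] _; auto.
  - intros [|i] Hi; [auto|lia].
Qed.

Lemma chain_zero {X} {d : X -> X -> R} {f : X -> X} dl a :
  minimal_points d f a -> ChainN d f dl 0 a a.
Proof.
  intros Ha. exists (fun _ => a). split; [split|split; reflexivity].
  - auto.
  - intros; lia.
Qed.

Lemma chain_reverse {X} {d : X -> X -> R} {f : X -> X} (Hd : is_metric d)
  (Hf : continuous_map d f) del a b : 0 < del ->
  minimal_points d f a -> minimal_points d f b -> d (f b) a <= 3 * del ->
  exists n, (1 <= n)%nat /\ ChainN d f (4 * del) n a b.
Proof.
  intros Hdel Ha Hb Hba.
  destruct (minimal_return Hd Hf a 1 del Ha Hdel) as [t Ht].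
  destruct (minimal_return Hd Hf b 2 del Hb Hdel) as [j Hj].
  assert (Hfb : minimal_points d f (f b)) by (apply minimal_inv; auto).
  assert (C1 := chain_orbit Hd Hf (4*del) t a ltac:(lra) Ha).
  assert (C2 : ChainN d f (4*del) 1 (Nat.iter t f a) (f b)).
  { apply chain_jump; auto. apply minimal_iter; auto.
    replace (t + 1)%nat with (S t) in Ht by lia. simpl in Ht.
    pose proof (metric_tri d Hd (f (Nat.iter t f a)) a (f b)).
    rewrite (metric_sym d Hd a (f b)) in H. lra. }
  assert (C3 := chain_orbit Hd Hf (4*del) j (f b) ltac:(lra) Hfb).
  assert (C4 : ChainN d f (4*del) 1 (Nat.iter j f (f b)) b).
  { apply chain_jump; auto. apply minimal_iter; auto.
    rewrite iter_Sr. replace (j + 2)%nat with (S (S j)) in Hj by lia. simpl in Hj. lra. }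
  exists (t + 1 + j + 1)%nat. split; [lia|].
  apply (chain_trans _ _ _ _ (Nat.iter j f (f b))); auto.
  apply (chain_trans _ _ _ _ (f b)); auto.
  apply (chain_trans _ _ _ _ (Nat.iter t f a)); auto.
Qed.

Lemma chain_back {X} {d : X -> X -> R} {f : X -> X} (Hd : is_metric d)
  (Hf : continuous_map d f) del (m : nat -> X) N : 0 < del ->
  (forall i, minimal_points d f (m i)) ->
  (forall i, d (f (m i)) (m (S i)) <= 3 * del) ->
  forall p, (p <= N)%nat -> exists n, (p <= n)%nat /\ ChainN d f (4 * del) n (m N) (m (N - p)%nat).
Proof.
  intros Hdel Hm Hj p. induction p; intros Hp.
  - exists O. split; auto. rewrite Nat.sub_0_r. apply chain_zero; auto.
  - destruct (IHp ltac:(lia)) as [n [Hn C]].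
    assert (E : (N - p)%nat = S (N - S p)) by lia.
    destruct (chain_reverse Hd Hf del (m (N - p)%nat) (m (N - S p)%nat) Hdel) as [n2 [Hn2 C2]]; auto.
    { rewrite E. apply Hj. }
    exists (n + n2)%nat. split; [lia|]. apply (chain_trans _ _ _ _ (m (N - p)%nat)); auto.
Qed.

Lemma mod_S (i L : nat) : (1 <= L)%nat ->
  (S (i mod L) < L /\ (S i) mod L = S (i mod L))%nat \/ (S (i mod L) = L /\ (S i) mod L = 0)%nat.
Proof.
  intros HL. pose proof (Nat.div_mod_eq i L) as E. pose proof (Nat.mod_upper_bound i L ltac:(lia)) as B.
  set (r := (i mod L)%nat) in *. set (q := (i / L)%nat) in *.
  assert (Si : S i = (S r + q * L)%nat) by lia.
  destruct (lt_dec (S r) L).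
  - left. split; auto. rewrite Si, Nat.Div0.mod_add. apply Nat.mod_small; auto.
  - right. split; [lia|]. assert (Si' : S i = (0 + (S q) * L)%nat) by lia.
    rewrite Si', Nat.Div0.mod_add. apply Nat.Div0.mod_0_l.
Qed.

Lemma periodic_chain {X} {d : X -> X -> R} {f : X -> X} dl L g :
  (1 <= L)%nat -> IsChain d f dl L g -> g L = g O ->
  let h := fun i => g (i mod L)%nat in
  (forall i, minimal_points d f (h i)) /\
  (forall i, d (f (h i)) (h (S i)) <= dl) /\
  (forall i, h (i + L)%nat = h i) /\
  (forall i, (i < L)%nat -> h i = g i).
Proof.
  intros HL [Hm Hj] Hper h. split; [|split; [|split]].
  - intros i. unfold h. apply Hm. pose proof (Nat.mod_upper_bound i L ltac:(lia)). lia.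
  - intros i. unfold h. pose proof (Nat.mod_upper_bound i L ltac:(lia)).
    destruct (mod_S i L HL) as [[H1 H2]|[H1 H2]]; rewrite H2.
    + apply Hj; lia.
    + rewrite <- Hper. pose proof (Hj (i mod L)%nat H) as HH. rewrite H1 in HH. exact HH.
  - intros i. unfold h. replace (i + L)%nat with (i + 1 * L)%nat by lia.
    rewrite Nat.Div0.mod_add. reflexivity.
  - intros i Hi. unfold h. rewrite Nat.mod_small; auto.
Qed.

Lemma closed_union {X} {d : X -> X -> R} (A B : X -> Prop) :
  is_closed d A -> is_closed d B -> is_closed d (fun x => A x \/ B x).
Proof.
  intros HA HB x Hx. destruct (classic (A x)) as [|HnA]; [left; auto|right].
  assert (Hr : exists r, 0 < r /\ forall z, A z -> r <= d x z).
  { apply NNPP. intros H. apply HnA. apply HA. intros e He.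
    apply NNPP. intros H2. apply H. exists e. split; auto. intros z Hz.
    apply Rnot_lt_le. intros H3. apply H2. eauto. }
  destruct Hr as [r [Hr Hrz]]. apply HB. intros e He.
  destruct (Hx (Rmin e r) (Rmin_pos _ _ He Hr)) as [y [[Hy|Hy] Hxy]].
  - pose proof (Hrz y Hy). pose proof (Rmin_r e r). lra.
  - exists y. split; auto. pose proof (Rmin_l e r). lra.
Qed.

Lemma closed_ext {X} {d : X -> X -> R} (A B : X -> Prop) :
  (forall x, A x <-> B x) -> is_closed d A -> is_closed d B.
Proof.
  intros E HA x Hx. apply E, HA. revert x Hx. apply closure_mono. intros; apply E; auto.
Qed.

Lemma periodic_shadow {X} {d : X -> X -> R} {f : X -> X} (Hd : is_metric d)
  (Hc : compact_metric d) (Hf : continuous_map d f) (h : nat -> X) L e :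
  (1 <= L)%nat -> (forall i, h (i + L)%nat = h i) ->
  (exists w, forall i, d (h i) (Nat.iter i f w) <= e) ->
  exists z, minimal_points d f z /\ forall i, d (h i) (Nat.iter i f z) <= e.
Proof.
  intros HL Hper [w Hw].
  set (Sh := fun j y => forall i, d (h (i + j)%nat) (Nat.iter i f y) <= e).
  assert (Shc : forall j, is_closed d (Sh j)).
  { intros j y Hy i. apply le_eps. intros eta Heta.
    destruct (iter_cont Hf i y eta Heta) as [r [Hr Hc']].
    destruct (Hy r Hr) as [y' [Hy' Hyy']].
    pose proof (Hy' i). pose proof (Hc' y' Hyy').
    pose proof (metric_tri d Hd (h (i + j)%nat) (Nat.iter i f y') (Nat.iter i f y)).
    rewrite (metric_sym d Hd (Nat.iter i f y')) in H1. lra. }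
  set (W2 := fun y => exists j, (j < L)%nat /\ Sh j y).
  assert (W2c : forall n, is_closed d (fun y => exists j, (j < n)%nat /\ Sh j y)).
  { induction n.
    - intros x Hx. exfalso. destruct (Hx 1 ltac:(lra)) as [y [[j [Hj _]] _]]. lia.
    - apply (closed_ext (fun y => (exists j, (j < n)%nat /\ Sh j y) \/ Sh n y)).
      + intros x. split.
        * intros [[j [Hj H]]|H]; exists j || exists n; split; auto; lia.
        * intros [j [Hj H]]. destruct (Nat.eq_dec j n); [subst; right; auto|left; exists j; split; auto; lia].
      + apply closed_union; auto. }
  assert (Hgood : good d f W2).
  { split; [|split].
    - exists w. exists O. split; [lia|]. intros i. rewrite Nat.add_0_r. auto.
    - apply W2c.
    - intros y [j [Hj Hy]]. destruct (Nat.eq_dec (S j) L).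
      + exists O. split; [lia|]. intros i. rewrite Nat.add_0_r.
        specialize (Hy (S i)). rewrite iter_Sr. simpl Nat.iter in Hy.
        replace (S i + j)%nat with (i + L)%nat in Hy by lia. rewrite Hper in Hy. exact Hy.
      + exists (S j). split; [lia|]. intros i.
        specialize (Hy (S i)). rewrite iter_Sr. simpl Nat.iter in Hy.
        replace (S i + j)%nat with (i + S j)%nat in Hy by lia. exact Hy. }
  destruct (birkhoff Hd Hc Hf W2 Hgood) as [Z [HZ HZW]].
  destruct HZ as [[[z0 Hz0] [HZc HZi]] HZm].
  destruct (HZW z0 Hz0) as [j [Hj Hs]].
  assert (HZit : forall n z, Z z -> Z (Nat.iter n f z)).
  { intros n z Hz. induction n; simpl; auto. }
  exists (Nat.iter (L - j) f z0). split.
  - apply (minset_point Hd Hf Z); [split; [split; [eauto|split; auto]|auto]|auto].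
  - intros i. specialize (Hs (i + (L - j))%nat).
    replace (i + (L - j) + j)%nat with (i + L)%nat in Hs by lia.
    rewrite Hper, Nat.iter_add in Hs. exact Hs.
Qed.

Lemma block_shadow {X} {d : X -> X -> R} {f : X -> X} (Hd : is_metric d)
  (Hc : compact_metric d) (Hf : continuous_map d f) e d0 del (xs : nat -> X) N :
  0 < del -> 4 * del <= d0 -> del <= e / 2 ->
  (forall ys : nat -> X, (forall i, closure d (minimal_points d f) (ys i)) ->
     (forall i, d (f (ys i)) (ys (S i)) <= d0) ->
     exists x, True /\ forall i, d (ys i) (Nat.iter i f x) <= e / 2) ->
  (forall i, closure d (minimal_points d f) (xs i)) ->
  (forall i, d (f (xs i)) (xs (S i)) <= del) ->
  (1 <= N)%nat ->
  exists z, minimal_points d f z /\ forall i, (i <= N)%nat -> d (xs i) (Nat.iter i f z) <= e.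
Proof.
  intros Hdel H4 He Hsh Hxs Hj HN.
  assert (Hm : forall i, exists m, minimal_points d f m /\ d (xs i) m < del /\ d (f (xs i)) (f m) < del).
  { intros i. destruct (Hf (xs i) del Hdel) as [r [Hr Hcr]].
    destruct (Hxs i (Rmin r del) (Rmin_pos _ _ Hr Hdel)) as [m [Hmm Hdm]].
    exists m. split; auto. pose proof (Rmin_l r del). pose proof (Rmin_r r del).
    split. lra. apply Hcr. lra. }
  destruct (my_choice _ Hm) as [m Hm'].
  assert (Hmin : forall i, minimal_points d f (m i)) by (intros; apply Hm').
  assert (Hmj : forall i, d (f (m i)) (m (S i)) <= 3 * del).
  { intros i. destruct (Hm' i) as [_ [_ H1]]. destruct (Hm' (S i)) as [_ [H2 _]].
    pose proof (Hj i) as T0.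
    pose proof (metric_tri d Hd (f (m i)) (f (xs i)) (m (S i))) as T1.
    pose proof (metric_tri d Hd (f (xs i)) (xs (S i)) (m (S i))) as T2.
    rewrite (metric_sym d Hd (f (xs i)) (f (m i))) in H1. lra. }
  destruct (chain_back Hd Hf del m N Hdel Hmin Hmj N (le_n N)) as [n [Hn [g2 [C2 [E2 F2]]]]].
  rewrite Nat.sub_diag in F2.
  assert (C1 : IsChain d f (4 * del) N m).
  { split. intros; auto. intros i _. pose proof (Hmj i). lra. }
  set (L := (N + n)%nat).
  assert (CL := chcat_chain (4 * del) N n m g2 C1 C2 (eq_sym E2)).
  assert (Hper : chcat N m g2 L = chcat N m g2 O).
  { unfold L. rewrite chcat_r by lia. rewrite chcat_l by lia.
    replace (N + n - N)%nat with n by lia. auto. }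
  destruct (periodic_chain (4 * del) L (chcat N m g2) ltac:(unfold L; lia) CL Hper)
    as [Pm [Pj [Pp Pg]]].
  set (h := fun i => chcat N m g2 (i mod L)) in *.
  destruct (periodic_shadow Hd Hc Hf h L (e/2) ltac:(unfold L; lia) Pp) as [z [Hz Hzs]].
  { assert (Q1 : forall i, closure d (minimal_points d f) (h i)) by (intros i; apply (sub_closure Hd); apply Pm).
    assert (Q2 : forall i, d (f (h i)) (h (S i)) <= d0) by (intros i; apply Rle_trans with (4 * del); [apply Pj|lra]).
    destruct (Hsh h Q1 Q2) as [x [_ Hx]]. exists x; auto. }
  exists z. split; auto. intros i Hi.
  pose proof (Hzs i) as H1.
  assert (Eh : h i = m i).
  { unfold h. rewrite Nat.mod_small by (unfold L; lia). apply chcat_l; lia. }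
  rewrite Eh in H1.
  destruct (Hm' i) as [_ [H2 _]].
  pose proof (metric_tri d Hd (xs i) (m i) (Nat.iter i f z)). lra.
Qed.

Theorem lemma2p2 (X : Type) (d : X -> X -> R) (f : X -> X)
  (Hd : is_metric d) (Hcpt : compact_metric d) (Hf : continuous_map d f) :
  shadowing_around d f (closure d (minimal_points d f)) ->
  (forall x, closure d (minimal_points d f) x ->
             closure d (minimal_points d f) (f x)) /\
  restriction_has_shadowing d f (closure d (minimal_points d f)).
Proof.
  intros Hsh. split.
  { intros x Hx. apply closureM_inv; auto. }
  intros e He.
  destruct (Hsh (e/2) ltac:(lra)) as [d0 [Hd0 Hsh']].
  set (del := Rmin (d0 / 4) (e / 2)).
  assert (Hdel : 0 < del) by (apply Rmin_pos; lra).
  assert (H4 : 4 * del <= d0) by (pose proof (Rmin_l (d0/4) (e/2)); unfold del; lra).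
  assert (He2 : del <= e / 2) by (apply Rmin_r).
  exists del. split; auto. intros xs Hxs Hj.
  assert (Hb : forall n : nat, exists z, minimal_points d f z /\
     forall i, (i <= S n)%nat -> d (xs i) (Nat.iter i f z) <= e).
  { intros n. apply (block_shadow Hd Hcpt Hf e d0 del); auto. lia. }
  destruct (my_choice _ Hb) as [zs Hzs].
  destruct (Hcpt zs) as [phi [l [Hphi Hconv]]].
  exists l. split.
  - intros eps Heps. destruct (Hconv eps Heps) as [N HN].
    exists (zs (phi N)). split. apply (proj1 (Hzs (phi N))).
    rewrite (metric_sym d Hd). apply HN. lia.
  - intros i. apply le_eps. intros eta Heta.
    destruct (iter_cont Hf i l eta Heta) as [r [Hr Hcr]].
    destruct (Hconv r Hr) as [N HN].
    set (k := Nat.max N i).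
    pose proof (phi_ge phi Hphi k).
    assert (H1 : d (xs i) (Nat.iter i f (zs (phi k))) <= e).
    { apply (proj2 (Hzs (phi k))). unfold k in *. lia. }
    assert (H2 : d (Nat.iter i f l) (Nat.iter i f (zs (phi k))) < eta).
    { apply Hcr. rewrite (metric_sym d Hd). apply HN. unfold k; lia. }
    pose proof (metric_tri d Hd (xs i) (Nat.iter i f (zs (phi k))) (Nat.iter i f l)) as T.
    rewrite (metric_sym d Hd (Nat.iter i f (zs (phi k))) (Nat.iter i f l)) in T. lra.
Qed.
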